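(* Let $S$ be a semigroup, $I,J$ nonempty index sets, and $P=(p_{ji})_{j\in J,i\in I}$ a $J\times I$ matrix with entries in $S$. If the Rees matrix semigroup $\mathcal{M}[S;I,J;P]$ is DSC, then $|I|=|J|=1$ and $S$ is DSC.
   Context: The Rees matrix semigroup $\mathcal{M}[S;I,J;P]$ is the set $I\times S\times J$ with multiplication $(i,g,j)(k,h,l)=(i,g\,p_{jk}\,h,l)$. For a semigroup $T$, a diagonal subsemigroup of $T\times T$ is a subsemigroup containing $\{(t,t)\colon t\in T\}$; a congruence on $T$ is a diagonal subsemigroup that is symmetric and transitive; $T$ is DSC if every diagonal subsemigroup of $T\times T$ is a congruence on $T$. *)

(* Defs.v *)
Definition associative {T : Type} (op : T -> T -> T) : Prop :=
  forall x y z, op x (op y z) = op (op x y) z.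

Definition diagonal_subsemigroup {T : Type} (op : T -> T -> T)
    (rho : T -> T -> Prop) : Prop :=
  (forall a b c d, rho a b -> rho c d -> rho (op a c) (op b d)) /\
  (forall t, rho t t).

Definition congruence {T : Type} (op : T -> T -> T) (rho : T -> T -> Prop)
    : Prop :=
  diagonal_subsemigroup op rho /\
  (forall a b, rho a b -> rho b a) /\
  (forall a b c, rho a b -> rho b c -> rho a c).

Definition DSC {T : Type} (op : T -> T -> T) : Prop :=
  forall rho : T -> T -> Prop, diagonal_subsemigroup op rho -> congruence op rho.

Definition rees_mul {S I J : Type} (mul : S -> S -> S) (P : J -> I -> S)
    (x y : I * S * J) : I * S * J :=
  match x, y with
  | (i, g, j), (k, h, l) => (i, mul (mul g (P j k)) h, l)
  end.

Definition singleton_type (X : Type) : Prop := exists x : X, forall y : X, y = x.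

(* Main.v *)
Require Import Defs.

Theorem mainTheorem4 (S I J : Type) (mul : S -> S -> S)
    (Hassoc : associative mul) (s0 : S) (i0 : I) (j0 : J) (P : J -> I -> S) :
  DSC (rees_mul mul P) ->
  singleton_type I /\ singleton_type J /\ DSC mul.
Proof.
  intros H. split; [|split].
  - exists i0. intros k.
    set (R := fun x y : I * S * J =>
          fst (fst x) = fst (fst y) \/ (fst (fst x) = i0 /\ fst (fst y) = k)).
    assert (HR : diagonal_subsemigroup (rees_mul mul P) R).
    { split.
      - intros [[a1 a2] a3] [[b1 b2] b3] [[c1 c2] c3] [[d1 d2] d3] Hab _.
        unfold R in *; simpl in *. exact Hab.
      - intros t. left. reflexivity. }
    destruct (H R HR) as [_ [Hs _]].
    assert (Hr : R (i0, s0, j0) (k, s0, j0)) by (right; simpl; auto).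
    destruct (Hs _ _ Hr) as [E | [E _]]; simpl in E; auto.
  - exists j0. intros l.
    set (R := fun x y : I * S * J =>
          snd x = snd y \/ (snd x = j0 /\ snd y = l)).
    assert (HR : diagonal_subsemigroup (rees_mul mul P) R).
    { split.
      - intros [[a1 a2] a3] [[b1 b2] b3] [[c1 c2] c3] [[d1 d2] d3] _ Hcd.
        unfold R in *; simpl in *. exact Hcd.
      - intros t. left. reflexivity. }
    destruct (H R HR) as [_ [Hs _]].
    assert (Hr : R (i0, s0, j0) (i0, s0, l)) by (right; simpl; auto).
    destruct (Hs _ _ Hr) as [E | [E _]]; simpl in E; auto.
  - intros rho [Hc Hd].
    set (R := fun x y : I * S * J =>
          fst (fst x) = fst (fst y) /\ snd x = snd y /\ rho (snd (fst x)) (snd (fst y))).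
    assert (HR : diagonal_subsemigroup (rees_mul mul P) R).
    { split.
      - intros [[a1 a2] a3] [[b1 b2] b3] [[c1 c2] c3] [[d1 d2] d3]
          [E1 [E2 Hab]] [F1 [F2 Hcd]].
        unfold R in *; simpl in *. subst.
        split; [reflexivity|split; [reflexivity|]].
        apply Hc; [apply Hc|]; auto.
      - intros t. unfold R. auto. }
    destruct (H R HR) as [_ [Hs Ht]].
    split; [split; auto|split].
    + intros a b Hab.
      assert (Hr : R (i0, a, j0) (i0, b, j0)) by (unfold R; simpl; auto).
      destruct (Hs _ _ Hr) as [_ [_ X]]. exact X.
    + intros a b c Hab Hbc.
      assert (Hr1 : R (i0, a, j0) (i0, b, j0)) by (unfold R; simpl; auto).
      assert (Hr2 : R (i0, b, j0) (i0, c, j0)) by (unfold R; simpl; auto).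
      destruct (Ht _ _ _ Hr1 Hr2) as [_ [_ X]]. exact X.
Qed.
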